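(* Let $\theta_1,\dots,\theta_{10}$ be real numbers such that $0<\theta_i<\theta_j<\theta_k<180$ for each of the triples $(i,j,k)\in\{(2,4,6),(1,5,9),(1,5,10),(1,5,7),(1,3,7),(1,4,7),(3,5,8),(2,8,9),(6,7,10)\}$, and write $s_{ij}=\sin(\theta_j-\theta_i)$. Then the $8\times 7$ matrix $$S_8=\begin{pmatrix} 0&-s_{58}&0&0&-s_{35}&0&0\\ -s_{89}&0&0&0&s_{29}&-s_{28}&0\\ s_{46}&0&-s_{26}&s_{24}&0&0&0\\ 0&0&0&-s_{7,10}&0&0&-s_{67}\\ 0&s_{17}&0&0&0&0&0\\ 0&0&s_{17}&0&0&0&0\\ 0&0&0&0&0&s_{15}&0\\ 0&0&0&0&0&0&s_{15} \end{pmatrix}$$ is a simplex.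
   Context: Angles are in degrees. A real matrix with $r+1$ rows and $r$ columns is called a simplex if, up to multiplication by a constant, there is precisely one positive linear dependency between its rows, i.e. there is a linear dependency among the rows with all coefficients strictly positive, and every linear dependency among the rows is a scalar multiple of it. (The columns of $S_8$ correspond to the unknowns $r_2,r_3,r_4,r_6,r_8,r_9,r_{10}$ in the triangle inequalities of a ten-line arrangement.) *)

(* Defs.v *)
From mathcomp Require Import all_boot all_order all_algebra.
From mathcomp Require Import reals trigo.
Set Implicit Arguments. Unset Strict Implicit. Unset Printing Implicit Defensive.
Import Order.TTheory GRing.Theory Num.Theory.
Local Open Scope ring_scope.

Definition sind {R : realType} (x : R) : R := sin (x * pi / 180).

(* s_{ij} = sin(theta_j - theta_i), angles in degrees; theta indexed by 1..10 *)
Definition sij {R : realType} (theta : nat -> R) (i j : nat) : R :=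
  sind (theta j - theta i).

Definition is_simplex {R : realType} (r : nat) (M : 'M[R]_(r.+1, r)) : Prop :=
  exists c : 'rV[R]_(r.+1),
    (forall i, 0 < c ord0 i) /\ c *m M = 0 /\
    (forall d : 'rV[R]_(r.+1), d *m M = 0 -> exists t : R, d = t *: c).

(* the 8 x 7 matrix S_8 (rows and columns numbered from 0) *)
Definition S8_entry {R : realType} (theta : nat -> R) (i j : nat) : R :=
  let s := sij theta in
  match i, j with
  | 0, 1 => - s 5 8
  | 0, 4 => - s 3 5
  | 1, 0 => - s 8 9
  | 1, 4 => s 2 9
  | 1, 5 => - s 2 8
  | 2, 0 => s 4 6
  | 2, 2 => - s 2 6
  | 2, 3 => s 2 4
  | 3, 3 => - s 7 10
  | 3, 6 => - s 6 7
  | 4, 1 => s 1 7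
  | 5, 2 => s 1 7
  | 6, 5 => s 1 5
  | 7, 6 => s 1 5
  | _, _ => 0
  end.

Definition S8 {R : realType} (theta : nat -> R) : 'M[R]_(8, 7) :=
  \matrix_(i < 8, j < 7) S8_entry theta i j.

Definition S8_triples : seq (nat * nat * nat) :=
  [:: (2,4,6); (1,5,9); (1,5,10); (1,5,7); (1,3,7); (1,4,7); (3,5,8); (2,8,9); (6,7,10)]%N.

(* Main.v *)
Require Import Defs.
From mathcomp Require Import all_boot all_order all_algebra.
From mathcomp Require Import reals trigo.
From mathcomp Require Import ring lra.
Import Order.TTheory GRing.Theory Num.Theory.
Local Open Scope ring_scope.

Lemma sind_pos (R : realType) (x : R) : 0 < x < 180 -> 0 < sind x.
Proof.
move=> /andP[x0 x1]; rewrite /sind; apply: sin_gt0_pi.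
have hp := @pi_gt0 R.
apply/andP; split.
  by rewrite divr_gt0 // mulr_gt0.
by rewrite ltr_pdivrMr // [pi * _]mulrC ltr_pM2r.
Qed.

Lemma sij_pos (R : realType) (theta : nat -> R) i j :
  0 < theta i -> theta i < theta j -> theta j < 180 -> 0 < sij theta i j.
Proof.
move=> h1 h2 h3; apply: sind_pos; apply/andP; split; first by rewrite subr_gt0.
lra.
Qed.

Lemma colE (R : realType) (theta : nat -> R) (d : 'rV[R]_8) (j : 'I_7) :
  (d *m S8 theta) ord0 j =
  \sum_(0 <= k < 8) d ord0 (inord k) * S8_entry theta k j.
Proof.
rewrite mxE big_mkord; apply: eq_bigr => i _; rewrite mxE.
by congr (d _ _ * _); apply: val_inj; rewrite /= inordK.
Qed.

Lemma lin1 {R : realType} {a b x y : R} : a != 0 -> - y * b + x * a = 0 -> x = y * b / a.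
Proof.
move=> ha e; rewrite -[x](mulfK ha); congr (_ / _).
by move/eqP: e; rewrite mulNr addrC subr_eq0 => /eqP.
Qed.

Lemma lin2 {R : realType} {a b x y : R} : a != 0 -> y * b - x * a = 0 -> x = y * b / a.
Proof.
move=> ha e; rewrite -[x](mulfK ha); congr (_ / _).
by move/eqP: e; rewrite subr_eq0 => /eqP ->.
Qed.

Lemma solve1 (R : realType) (a b x : R) : a != 0 -> x * a = b -> x = b / a.
Proof. by move=> ha <-; field. Qed.

Definition cv {R : realType} (theta : nat -> R) (k : nat) : R :=
  let s := sij theta in
  let c1 := s 3 5 / s 2 9 in
  let c2 := c1 * s 8 9 / s 4 6 in
  let c3 := c2 * s 2 4 / s 7 10 in
  match k with
  | 0 => 1
  | 1 => c1
  | 2 => c2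
  | 3 => c3
  | 4 => s 5 8 / s 1 7
  | 5 => c2 * s 2 6 / s 1 7
  | 6 => c1 * s 2 8 / s 1 5
  | _ => c3 * s 6 7 / s 1 5
  end.

Theorem lemmal (R : realType) (theta : nat -> R) :
  (forall i j k : nat, (i, j, k) \in S8_triples ->
     0 < theta i /\ theta i < theta j /\ theta j < theta k /\ theta k < 180) ->
  is_simplex (S8 theta).
Proof.
move=> H.
have T : forall i j k, (i, j, k) \in S8_triples ->
   0 < sij theta i j /\ 0 < sij theta j k /\ 0 < sij theta i k.
  move=> i j k /H [h1 [h2 [h3 h4]]]; split; last split; apply: sij_pos => //; lra.
have [p24 [p46 p26]] := T 2%N 4%N 6%N isT.
have [p15 [p59 p19]] := T 1%N 5%N 9%N isT.
have [_ [p510 _]] := T 1%N 5%N 10%N isT.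
have [_ [p57 p17]] := T 1%N 5%N 7%N isT.
have [p35 [p58 p38]] := T 3%N 5%N 8%N isT.
have [p28 [p89 p29]] := T 2%N 8%N 9%N isT.
have [p67 [p710 p610]] := T 6%N 7%N 10%N isT.
have EQ : forall d : 'rV[R]_8, d *m S8 theta = 0 <->
  - d ord0 (inord 1) * sij theta 8 9 + d ord0 (inord 2) * sij theta 4 6 = 0 /\
      - d ord0 (inord 0) * sij theta 5 8 + d ord0 (inord 4) * sij theta 1 7 = 0 /\
      - d ord0 (inord 2) * sij theta 2 6 + d ord0 (inord 5) * sij theta 1 7 = 0 /\
      d ord0 (inord 2) * sij theta 2 4 - d ord0 (inord 3) * sij theta 7 10 = 0 /\
      - d ord0 (inord 0) * sij theta 3 5 + d ord0 (inord 1) * sij theta 2 9 = 0 /\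
      - d ord0 (inord 1) * sij theta 2 8 + d ord0 (inord 6) * sij theta 1 5 = 0 /\
      - d ord0 (inord 3) * sij theta 6 7 + d ord0 (inord 7) * sij theta 1 5 = 0.
  move=> d; split.
    move=> hd.
    have E : forall j : 'I_7, \sum_(0 <= k < 8) d ord0 (inord k) * S8_entry theta k j = 0.
      by move=> j; rewrite -colE hd mxE.
    have := E (@Ordinal 7 0 isT); have := E (@Ordinal 7 1 isT);
    have := E (@Ordinal 7 2 isT); have := E (@Ordinal 7 3 isT);
    have := E (@Ordinal 7 4 isT); have := E (@Ordinal 7 5 isT);
    have := E (@Ordinal 7 6 isT).
    rewrite /= !big_nat_recl // big_geq //= => e6 e5 e4 e3 e2 e1 e0.
    rewrite !(mulr0, add0r, addr0) in e0 e1 e2 e3 e4 e5 e6.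
    by rewrite !mulNr -!mulrN; do !split.
  move=> [e0 [e1 [e2 [e3 [e4 [e5 e6]]]]]].
  apply/matrixP => i j; rewrite ord1 [RHS]mxE colE.
  case: j => [[|[|[|[|[|[|[|//]]]]]]] Hj];
    rewrite !big_nat_recl // big_geq //= !(mulr0, add0r, addr0) ?mulrN.
  all: rewrite -?mulNr.
  exact e0.
  exact e1.
 exact e2.
 rewrite mulNr; exact e3.
 exact e4. exact e5. exact e6.

have cpos : forall k, (k < 8)%N -> 0 < cv theta k.
  move=> k; rewrite /cv.
  by case: k => [|[|[|[|[|[|[|[|//]]]]]]]] _;
    repeat first [assumption | exact: ltr01 | apply: mulr_gt0 | rewrite invr_gt0].

have n24 := lt0r_neq0 p24; have n46 := lt0r_neq0 p46; have n26 := lt0r_neq0 p26.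
have n15 := lt0r_neq0 p15; have n17 := lt0r_neq0 p17; have n35 := lt0r_neq0 p35.
have n58 := lt0r_neq0 p58; have n28 := lt0r_neq0 p28; have n89 := lt0r_neq0 p89.
have n29 := lt0r_neq0 p29; have n67 := lt0r_neq0 p67; have n710 := lt0r_neq0 p710.
exists (\row_k cv theta k); split.
  by move=> i; rewrite mxE; apply: cpos.
split.
  apply/EQ.
  have F : forall n : nat, (n < 8)%N -> (\row_(k < 8) cv theta k) ord0 (inord n) = cv theta n.
    by move=> n hn; rewrite mxE inordK.
  rewrite !F // /cv.
  do !split; field.
  all: try by rewrite ?lt0r_neq0.
 rewrite ?n24 ?n46 ?n26 ?n15 ?n17 ?n35 ?n58 ?n28 ?n89 ?n29 ?n67 ?n710.
move=> d /EQ [e0 [e1 [e2 [e3 [e4 [e5 e6]]]]]].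
exists (d ord0 (inord 0)).
have h1 := lin1 n29 e4.
have h2 := lin1 n46 e0.
have h3 := lin2 n710 e3.
have h4 := lin1 n17 e1.
have h5 := lin1 n17 e2.
have h6 := lin1 n15 e5.
have h7 := lin1 n15 e6.
apply/matrixP => i j; rewrite (ord1 i) !mxE.
rewrite -[in LHS](inord_val j).
case: j => [[|[|[|[|[|[|[|[|//]]]]]]]] Hi] /=; rewrite /cv.
all: rewrite ?h7 ?h6 ?h5 ?h4 ?h3 ?h2 ?h1.
all: first [by rewrite mulr1 | by rewrite !mulrA | ring].
Qed.
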